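(* Let $P$ and $Q$ be two plane posets with $P\leq Q$. Then any path in the (oriented) Hasse graph of the poset $(\mathcal{PP},\leq)$ from $P$ to $Q$ has length $\ell(Q)-\ell(P)$, where $\ell(R)=\sharp\{(x,y)\in R^2\mid x<_r y\}$ is the level of a plane poset $R$.
   Context: A plane poset is a finite set with two partial orders $\leq_h,\leq_r$ such that two distinct elements are $\leq_h$-comparable iff they are not $\leq_r$-comparable; $\mathcal{PP}$ is the set of isomorphism classes of plane posets. On a plane poset, $x\leq y$ iff ($x\leq_h y$ or $x\leq_r y$) is a total order (known fact). For $P,Q$ of equal cardinality, $\theta_{P,Q}$ is the increasing bijection $P\to Q$ and $P\leq Q$ means: for all $x,y\in P$, $\theta_{P,Q}(x)\leq_h\theta_{P,Q}(y)$ in $Q$ implies $x\leq_h y$ in $P$; this is a partial order on each set of plane posets of fixed cardinality (posets of different cardinalities are incomparable). *)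

(* Defs.v *)
From mathcomp Require Import all_boot all_order all_algebra.
Set Implicit Arguments. Unset Strict Implicit. Unset Printing Implicit Defensive.

Record PlanePoset := {
  pp_T : finType;
  leh : rel pp_T;
  ler : rel pp_T;
  leh_refl : reflexive leh;
  leh_anti : antisymmetric leh;
  leh_trans : transitive leh;
  ler_refl : reflexive ler;
  ler_anti : antisymmetric ler;
  ler_trans : transitive ler;
  pp_plane : forall x y : pp_T, x != y ->
     (leh x y || leh y x) = ~~ (ler x y || ler y x)
}.

Definition pp_le (P : PlanePoset) (x y : pp_T P) : bool := @leh P x y || @ler P x y.

Definition pp_ltr (P : PlanePoset) (x y : pp_T P) : bool := (x != y) && @ler P x y.

Definition level (P : PlanePoset) : nat :=
  #|[set p : pp_T P * pp_T P | @pp_ltr P p.1 p.2]|.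

(* isomorphism of plane posets (equality in PP) *)
Definition pp_iso (P Q : PlanePoset) : Prop :=
  exists f : pp_T P -> pp_T Q, bijective f /\
    (forall x y, @leh Q (f x) (f y) = @leh P x y) /\
    (forall x y, @ler Q (f x) (f y) = @ler P x y).

(* P <= Q : with theta the increasing bijection P -> Q (for the total orders;
   it is unique when it exists, and exists iff #P = #Q),
   theta x <=_h theta y in Q implies x <=_h y in P. *)
Definition pp_leq (P Q : PlanePoset) : Prop :=
  exists theta : pp_T P -> pp_T Q, bijective theta /\
    (forall x y, @pp_le Q (theta x) (theta y) = @pp_le P x y) /\
    (forall x y, @leh Q (theta x) (theta y) -> @leh P x y).

Definition hasse_edge (P Q : PlanePoset) : Prop :=
  pp_leq P Q /\ ~ pp_iso P Q /\
  forall R : PlanePoset, pp_leq P R -> pp_leq R Q -> pp_iso R P \/ pp_iso R Q.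

(* Main.v *)
Require Import Defs.
From mathcomp Require Import all_boot all_order all_algebra.
From mathcomp Require Import zify.
From Stdlib Require Import Classical.
Set Implicit Arguments. Unset Strict Implicit. Unset Printing Implicit Defensive.

Section Basic.
Variable P : PlanePoset.
Local Notation T := (pp_T P).
Implicit Types a b c : T.

Lemma hT a b c : leh a b -> leh b c -> leh a c.
Proof. move=> h1 h2; exact: (@leh_trans P b a c h1 h2). Qed.
Lemma rT a b c : ler a b -> ler b c -> ler a c.
Proof. move=> h1 h2; exact: (@ler_trans P b a c h1 h2). Qed.
Lemma hA a b : leh a b -> leh b a -> a = b.
Proof. move=> h1 h2; apply: (@leh_anti P); by rewrite h1 h2. Qed.
Lemma rA a b : ler a b -> ler b a -> a = b.
Proof. move=> h1 h2; apply: (@ler_anti P); by rewrite h1 h2. Qed.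

Lemma excl a b : a != b -> leh a b || leh b a -> ler a b || ler b a -> False.
Proof. move=> ab h r; move: (pp_plane ab); by rewrite h r. Qed.

Lemma dich a b : a != b -> [|| leh a b, leh b a, ler a b | ler b a].
Proof.
move=> ab; move: (pp_plane ab).
by case: (leh a b); case: (leh b a); case: (ler a b); case: (ler b a).
Qed.

Definition ltp a b := (a != b) && (leh a b || ler b a).

Lemma ltpxx a : ltp a a = false.
Proof. by rewrite /ltp eqxx. Qed.

Lemma ltp_trans a b c : ltp a b -> ltp b c -> ltp a c.
Proof.
move=> /andP[ab h1] /andP[bc h2].
have ac : a != c.
  apply/eqP => eac; subst c.
  case/orP: h1 => h1; case/orP: h2 => h2.
  - by move: ab; rewrite (hA h1 h2) eqxx.
  - by apply: (excl ab); rewrite ?h1 ?h2 ?orbT.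
  - by apply: (excl ab); rewrite ?h1 ?h2 ?orbT.
  - by move: ab; rewrite (rA h2 h1) eqxx.
rewrite /ltp ac /=.
case/orP: h1 => h1; case/orP: h2 => h2.
- by rewrite (hT h1 h2).
- case/or4P: (dich ac) => h3; rewrite ?h3 ?orbT //.
  + have hcb := hT h3 h1.
    by exfalso; apply: (excl bc); rewrite ?hcb ?h2 ?orbT.
  + have rab := rT h3 h2.
    by exfalso; apply: (excl ab); rewrite ?rab ?h1 ?orbT.
- case/or4P: (dich ac) => h3; rewrite ?h3 ?orbT //.
  + have hba := hT h2 h3.
    by exfalso; apply: (excl ab); rewrite ?hba ?h1 ?orbT.
  + have rbc := rT h1 h3.
    by exfalso; apply: (excl bc); rewrite ?rbc ?h2 ?orbT.
- by rewrite (rT h2 h1) orbT.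
Qed.

Definition I a b := [set w | ltp a w && ltp w b].

Lemma I_lt_l x z y : ltp x z -> ltp z y -> #|I x z| < #|I x y|.
Proof.
move=> xz zy; apply: proper_card; apply/properP; split.
  apply/subsetP => w; rewrite !inE => /andP[-> wz] /=; exact: ltp_trans wz zy.
by exists z; rewrite !inE ?xz ?zy ?ltpxx.
Qed.

Lemma I_lt_r x z y : ltp x z -> ltp z y -> #|I z y| < #|I x y|.
Proof.
move=> xz zy; apply: proper_card; apply/properP; split.
  apply/subsetP => w; rewrite !inE => /andP[zw ->]; rewrite andbT; exact: ltp_trans xz zw.
by exists z; rewrite !inE ?xz ?zy ?ltpxx.
Qed.

End Basic.

Section Theta.
Variables (P Q : PlanePoset) (th : pp_T P -> pp_T Q).
Hypothesis thinj : injective th.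
Hypothesis thle : forall a b, pp_le (th a) (th b) = pp_le a b.
Hypothesis thh : forall a b, leh (th a) (th b) -> leh a b.
Local Notation T := (pp_T P).
Implicit Types a b c x y z u v : T.

Definition cand x y := [&& x != y, leh x y & ~~ leh (th x) (th y)].

Lemma thneq a b : a != b -> th a != th b.
Proof. by move=> ab; apply/eqP => /thinj /eqP; rewrite (negbTE ab). Qed.

Lemma ler_thQ a b : leh a b -> ~~ leh (th a) (th b) -> ler (th a) (th b).
Proof.
move=> h nh; have := thle a b; rewrite /pp_le h /= (negbTE nh) /=.
by move=> ->.
Qed.

Lemma ler_th a b : a != b -> ler a b -> ler (th a) (th b).
Proof.
move=> ab r; have := thle a b; rewrite /pp_le r orbT.
case E: (leh (th a) (th b)) => //= _.
by exfalso; apply: (excl ab); rewrite ?(thh E) ?r ?orbT.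
Qed.

Definition good x y := [/\ cand x y,
  (forall z, z != x -> z != y -> leh x z -> leh z y -> False),
  (forall u, u != x -> ler u x -> ler u y) &
  (forall v, v != y -> ler y v -> ler x v)].

Lemma ex_good n : forall x y, #|I x y| < n -> cand x y -> exists x' y', good x' y'.
Proof.
elim: n => [//|n IH] x y Hn Hc.
have /and3P[xy hxy nq] := Hc.
case: (classic (exists z, [/\ z != x, z != y, leh x z & leh z y])).
  move=> [z [zx zy hxz hzy]].
  have lxz : ltp x z by rewrite /ltp eq_sym zx hxz.
  have lzy : ltp z y by rewrite /ltp zy hzy.
  case E: (leh (th x) (th z)).
    have E2 : ~~ leh (th z) (th y).
      by apply/negP => E2; move: nq; rewrite (hT E E2).
    apply: (IH z y); first exact: leq_trans (I_lt_r lxz lzy) Hn.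
    by rewrite /cand zy hzy E2.
  apply: (IH x z); first exact: leq_trans (I_lt_l lxz lzy) Hn.
  by rewrite /cand eq_sym zx hxz E.
move=> NA.
case: (classic (exists u, [/\ u != x, ler u x & ~~ ler u y])).
  move=> [u [ux rux nruy]].
  have uy : u != y.
    apply/eqP => euy; subst u.
    by apply: (excl xy); rewrite ?hxy ?rux ?orbT.
  have huy : leh u y.
    case/or4P: (dich uy) => h //.
    - have hxu := hT hxy h.
      by exfalso; apply: (excl ux); rewrite ?hxu ?rux ?orbT.
    - by rewrite h in nruy.
    - have ryx := rT h rux.
      by exfalso; apply: (excl xy); rewrite ?hxy ?ryx ?orbT.
  have lxu : ltp x u by rewrite /ltp eq_sym ux rux orbT.
  have luy : ltp u y by rewrite /ltp uy huy.
  apply: (IH u y); first exact: leq_trans (I_lt_r lxu luy) Hn.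
  rewrite /cand uy huy /=; apply/negP => E.
  have r1 := ler_th ux rux.
  have r2 := ler_thQ hxy nq.
  have r3 := rT r1 r2.
  by apply: (excl (thneq uy)); rewrite ?E ?r3 ?orbT.
move=> NB.
case: (classic (exists v, [/\ v != y, ler y v & ~~ ler x v])).
  move=> [v [vy ryv nrxv]].
  have vx : v != x.
    apply/eqP => evx; subst v.
    by apply: (excl vy); rewrite ?hxy ?ryv ?orbT.
  have xv : x != v by rewrite eq_sym.
  have hxv : leh x v.
    case/or4P: (dich xv) => h //.
    - have hvy := hT h hxy.
      by exfalso; apply: (excl vy); rewrite ?hvy ?ryv ?orbT.
    - by rewrite h in nrxv.
    - have ryx := rT ryv h.
      by exfalso; apply: (excl xy); rewrite ?hxy ?ryx ?orbT.
  have lxv : ltp x v by rewrite /ltp xv hxv.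
  have lvy : ltp v y by rewrite /ltp vy ryv orbT.
  apply: (IH x v); first exact: leq_trans (I_lt_l lxv lvy) Hn.
  rewrite /cand xv hxv /=; apply/negP => E.
  have yv : y != v by rewrite eq_sym.
  have r1 := ler_th yv ryv.
  have r2 := ler_thQ hxy nq.
  have r3 := rT r2 r1.
  by apply: (excl (thneq xv)); rewrite ?E ?r3 ?orbT.
move=> NC.
exists x, y; split => //.
- by move=> z zx zy hxz hzy; apply: NA; exists z.
- move=> u ux rux; case E: (ler u y) => //; exfalso; apply: NB; exists u.
  by rewrite E.
- move=> v vy ryv; case E: (ler x v) => //; exfalso; apply: NC; exists v.
  by rewrite E.
Qed.

Lemma no_cand_iso : bijective th -> (forall x y, ~~ cand x y) -> pp_iso P Q.
Proof.
move=> bth nc; exists th; split=> //.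
have HH : forall a b, leh (th a) (th b) = leh a b.
  move=> a b; apply/idP/idP; first exact: thh.
  case: (eqVneq a b) => [-> _|ab h]; first by rewrite leh_refl.
  by move: (nc a b); rewrite /cand ab h /= negbK.
split=> // a b; apply/idP/idP.
  case: (eqVneq a b) => [-> _|ab r]; first by rewrite ler_refl.
  have E : leh a b = false.
    rewrite -HH; apply/negP => h.
    by apply: (excl (thneq ab)); rewrite ?h ?r ?orbT.
  by move: (thle a b); rewrite /pp_le r orbT E.
case: (eqVneq a b) => [-> _|ab r]; first by rewrite ler_refl.
exact: ler_th.
Qed.

End Theta.

Section Construct.
Variable P : PlanePoset.
Local Notation T := (pp_T P).
Variables x y : T.
Hypothesis xy : x != y.
Hypothesis hxy : leh x y.
Hypothesis G2 : forall z, z != x -> z != y -> leh x z -> leh z y -> False.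
Hypothesis G3 : forall u, u != x -> ler u x -> ler u y.
Hypothesis G4 : forall v, v != y -> ler y v -> ler x v.

Definition lehR (a b : T) := leh a b && ~~ ((a == x) && (b == y)).
Definition lerR (a b : T) := ler a b || ((a == x) && (b == y)).

Lemma yx : (y == x) = false.
Proof. by rewrite eq_sym (negbTE xy). Qed.

Lemma hyx : leh y x = false.
Proof. by apply/negP => h; move: xy; rewrite (hA hxy h) eqxx. Qed.

Lemma lehR_refl : reflexive lehR.
Proof. move=> a; rewrite /lehR leh_refl /=; apply/negP => /andP[/eqP -> /eqP e]; by move: xy; rewrite e eqxx. Qed.

Lemma lehR_anti : antisymmetric lehR.
Proof. move=> a b /andP[/andP[h1 _] /andP[h2 _]]; exact: hA h1 h2. Qed.

Lemma lehR_trans : transitive lehR.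
Proof.
move=> b a c /andP[h1 n1] /andP[h2 n2]; rewrite /lehR (hT h1 h2) /=.
apply/negP => /andP[/eqP ea /eqP ec]; subst a c.
apply: (G2 (z:=b)) => //.
- by apply/eqP => eb; subst b; move: n2; rewrite !eqxx.
- by apply/eqP => eb; subst b; move: n1; rewrite !eqxx.
Qed.

Lemma lerR_refl : reflexive lerR.
Proof. by move=> a; rewrite /lerR ler_refl. Qed.

Lemma lerR_anti : antisymmetric lerR.
Proof.
move=> a b /andP[]; rewrite /lerR.
case/orP => [r1|/andP[/eqP ea /eqP eb]]; case/orP => [r2|/andP[/eqP eb' /eqP ea']].
- exact: rA r1 r2.
- subst; by exfalso; apply: (excl xy); rewrite ?hxy ?r1 ?orbT.
- subst; by exfalso; apply: (excl xy); rewrite ?hxy ?r2 ?orbT.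
- by subst; move: xy; rewrite eqxx.
Qed.

Lemma lerR_trans : transitive lerR.
Proof.
move=> b a c; rewrite /lerR.
case/orP => [r1|/andP[/eqP ea /eqP eb]]; case/orP => [r2|/andP[/eqP eb' /eqP ec]].
- by rewrite (rT r1 r2).
- subst b c; case: (eqVneq a x) => [->|ax]; first by rewrite !eqxx orbT.
  by rewrite (G3 ax r1).
- subst a b; case: (eqVneq c y) => [->|cy]; first by rewrite !eqxx orbT.
  by rewrite (G4 cy r2).
- by subst; move: xy; rewrite eqxx.
Qed.

Lemma R_plane : forall a b : T, a != b ->
  (lehR a b || lehR b a) = ~~ (lerR a b || lerR b a).
Proof.
move=> a b ab; rewrite /lehR /lerR.
case Hp: ((a == x) && (b == y)).
  move/andP: Hp => [/eqP -> /eqP ->]; by rewrite ?eqxx ?yx ?hyx ?andbF ?orbT.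
case Hq: ((b == x) && (a == y)).
  move/andP: Hq => [/eqP -> /eqP ->]; by rewrite ?eqxx ?yx ?hyx ?andbF ?orbT.
rewrite /= !andbT !orbF; exact: pp_plane.
Qed.

Definition Rpp : PlanePoset :=
  @Build_PlanePoset T lehR lerR lehR_refl lehR_anti lehR_trans
     lerR_refl lerR_anti lerR_trans R_plane.

Lemma level_R : level Rpp = (level P).+1.
Proof.
rewrite /level.
have -> : [set p : pp_T Rpp * pp_T Rpp | pp_ltr p.1 p.2] =
          (x, y) |: [set p : T * T | pp_ltr p.1 p.2].
  apply/setP => -[a b]; rewrite !inE /pp_ltr /= /lerR xpair_eqE.
  case H: ((a == x) && (b == y)); last by rewrite orbF.
  case/andP: H => /eqP ea /eqP eb; by rewrite ea eb xy orbT.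
rewrite cardsU1 inE /pp_ltr /= xy /=.
case E: (ler x y) => //.
by exfalso; apply: (excl xy); rewrite ?hxy ?E ?orbT.
Qed.

Lemma leq_PR : pp_leq P Rpp.
Proof.
exists id; split; first exact: (Bijective (g:=id)).
split=> a b /=; last by case/andP.
rewrite /pp_le /= /lehR /lerR.
case H: ((a == x) && (b == y)); last by rewrite andbT orbF.
case/andP: H => /eqP ea /eqP eb; rewrite !orbT; subst a b; by rewrite hxy.
Qed.

End Construct.

Lemma level_iso P Q : pp_iso P Q -> level P = level Q.
Proof.
move=> [f [bf [fh fr]]]; have finj := bij_inj bf.
have [g fg gf] := bf.
rewrite /level.
set F := fun p : pp_T P * pp_T P => (f p.1, f p.2).
have Finj : injective F.
  by move=> [a b] [c d] [/finj -> /finj ->].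
have E : [set p : pp_T Q * pp_T Q | pp_ltr p.1 p.2] =
         F @: [set p : pp_T P * pp_T P | pp_ltr p.1 p.2].
  apply/setP => -[a b]; apply/idP/idP.
    rewrite inE /= => H; apply/imsetP; exists (g a, g b); last by rewrite /F /= !gf.
    by rewrite inE /pp_ltr /= -fr !gf (inj_eq (can_inj gf)).
  move=> /imsetP [[c d]]; rewrite inE /= => H [-> ->].
  by rewrite inE /pp_ltr /= fr (inj_eq finj).
by rewrite E card_imset.
Qed.

Lemma edge_level P Q : hasse_edge P Q -> level Q = (level P).+1.
Proof.
move=> [[th [bth [thle thh]]] [niso cover]].
have thinj := bij_inj bth.
case: (classic (exists x y, cand th x y)) => [[x [y c]]|nc]; last first.
  exfalso; apply: niso; apply: (no_cand_iso thinj thle thh bth) => x y.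
  by apply/negP => c; apply: nc; exists x, y.
have [x' [y' [c' G2 G3 G4]]] := ex_good thinj thle thh (ltnSn #|I x y|) c.
case/and3P: c' => xy hxy nq.
have PR := leq_PR xy hxy G2 G3 G4.
have RQ : pp_leq (Rpp xy hxy G2 G3 G4) Q.
  exists th; split=> //; split=> a b /=.
    rewrite thle /pp_le /= /lehR /lerR.
    case H: ((a == x') && (b == y')); last by rewrite andbT orbF.
    case/andP: H => /eqP ea /eqP eb; rewrite !orbT; subst a b; by rewrite hxy.
  move=> h; rewrite /lehR (thh _ _ h) /=; apply/negP => /andP[/eqP ea /eqP eb].
  by subst a b; rewrite h in nq.
case: (cover _ PR RQ) => /level_iso; rewrite level_R => e //.
by move: e; lia.
Qed.

Theorem proposition27 (P Q : PlanePoset) :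
  pp_leq P Q ->
  forall (k : nat) (s : nat -> PlanePoset),
    pp_iso (s 0) P -> pp_iso (s k) Q ->
    (forall i, i < k -> hasse_edge (s i) (s i.+1)) ->
    (k%:Z = (level Q)%:Z - (level P)%:Z)%R.
Proof.
move=> _ k s i0 ik he.
have H : forall j, j <= k -> level (s j) = level (s 0) + j.
  elim=> [|j IH] jk; first by rewrite addn0.
  by rewrite (edge_level (he j jk)) IH ?addnS // ltnW.
rewrite -(level_iso i0) -(level_iso ik) (H k (leqnn k)).
lia.
Qed.
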